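(* Let $\mu$ be a partition of $n$, let $T$ be a row-strict filling of $\mu$, and write $\Phi(T)=x_2^{\alpha_2}\cdots x_n^{\alpha_n}$. For each $i\in\{2,\dots,n\}$, the shape $\mu^{(i)}$ of the subfilling $T^{(i)}$ has at least $\alpha_i+1$ nonzero rows.
   Context: A partition $\mu=(\mu_1\ge\cdots\ge\mu_s>0)$ of $n$ is drawn as a Young diagram with $\mu_k$ boxes in row $k$ (rows top to bottom, left-justified). A filling places $1,\dots,n$ bijectively in the boxes; it is row-strict if entries increase left to right along rows. $T^{(i)}$ is obtained from $T$ by deleting the boxes containing $i+1,\dots,n$; its shape is $\mu^{(i)}$. Dimension pairs (with $h(j)=j$): $(a,b)$ is a dimension pair of $T$ if (1) $b>a$; (2) $b$ is in the same column as $a$ strictly below it, or in a column strictly left of $a$'s column; (3) if a box immediately right of $a$ exists and contains $c$, then $b\le c$. $D^T_j$ is the set of dimension pairs $(a,j)$, and $\Phi(T)=\prod_{j=2}^n x_j^{|D^T_j|}\in\mathbb{Z}[x_1,\dots,x_n]$. *)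

(* Defs.v *)
From mathcomp Require Import all_boot.
Set Implicit Arguments. Unset Strict Implicit. Unset Printing Implicit Defensive.

Definition is_partition (n : nat) (mu : seq nat) : bool :=
  [&& sorted geq mu, all (fun k => 0 < k) mu & sumn mu == n].

(* A filling is a list of rows (row 0 = top row), each row a list of entries
   read left to right.  Box (r, c) = row r, column c (0-indexed). *)
Definition filling := seq (seq nat).

Definition fshape (T : filling) : seq nat := map size T.

Definition is_filling (n : nat) (mu : seq nat) (T : filling) : bool :=
  (fshape T == mu) && perm_eq (flatten T) (iota 1 n).

Definition row_strict (T : filling) : bool := all (sorted ltn) T.

Definition rowlen (T : filling) (r : nat) : nat := size (nth [::] T r).
Definition entry (T : filling) (r c : nat) : nat := nth 0 (nth [::] T r) c.

(* (a, b) is a dimension pair of T (with h(j) = j). *)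
Definition dimpair (T : filling) (a b : nat) : bool :=
  (a < b) &&
  has (fun ra => has (fun ca =>
     (entry T ra ca == a) &&
     has (fun rb => has (fun cb =>
        [&& entry T rb cb == b,
            ((cb == ca) && (ra < rb)) || (cb < ca)
          & (ca.+1 < rowlen T ra) ==> (b <= entry T ra ca.+1)])
       (iota 0 (rowlen T rb))) (iota 0 (size T)))
     (iota 0 (rowlen T ra))) (iota 0 (size T)).

(* |D^T_j| = number of dimension pairs (a, j); this is the exponent of x_j in Phi(T). *)
Definition alpha (T : filling) (j : nat) : nat :=
  count (fun a => dimpair T a j) (iota 0 j).

Definition subfilling (T : filling) (i : nat) : filling :=
  map (filter (fun x => x <= i)) T.

Definition nonzero_rows (s : seq nat) : nat := count (fun k => k != 0) s.

(* Main.v *)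
Require Import Defs.
From mathcomp Require Import all_boot.
Set Implicit Arguments. Unset Strict Implicit.

Lemma row_unique (T : filling) r1 r2 x :
  uniq (flatten T) -> r1 < size T -> r2 < size T ->
  x \in nth [::] T r1 -> x \in nth [::] T r2 -> r1 = r2.
Proof.
elim: T r1 r2 => [|s T IH] [|r1] [|r2] //=; rewrite cat_uniq => /and3P[_ dis U] h1 h2 m1 m2.
- case/negP: dis; apply/hasP; exists x => //; apply/flattenP; exists (nth [::] T r2) => //.
  exact: mem_nth.
- case/negP: dis; apply/hasP; exists x => //; apply/flattenP; exists (nth [::] T r1) => //.
  exact: mem_nth.
- by rewrite (IH r1 r2).
Qed.

Definition frow (T : filling) (x : nat) := find (fun row => x \in row) T.

Lemma frow_spec T r x : uniq (flatten T) -> r < size T -> x \in nth [::] T r ->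
  frow T x = r.
Proof.
move=> U hr hx.
have hs : has (fun row => x \in row) T.
  by apply/hasP; exists (nth [::] T r) => //; exact: mem_nth.
have h1 : frow T x < size T by rewrite /frow -has_find.
have h2 : x \in nth [::] T (frow T x) := nth_find [::] hs.
exact: (row_unique U h1 hr h2 hx).
Qed.

Lemma dimpairP T a b : dimpair T a b -> exists ra ca rb cb,
  a < b /\ ra < size T /\ ca < rowlen T ra /\ entry T ra ca = a /\
  rb < size T /\ cb < rowlen T rb /\ entry T rb cb = b /\
  (((cb == ca) && (ra < rb)) || (cb < ca)) /\
  ((ca.+1 < rowlen T ra) -> b <= entry T ra ca.+1).
Proof.
case/andP=> ab /hasP[ra]; rewrite mem_iota => /andP[_ hra] /hasP[ca].
rewrite mem_iota => /andP[_ hca] /andP[/eqP ea] /hasP[rb]; rewrite mem_iota => /andP[_ hrb].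
case/hasP=> cb; rewrite mem_iota => /andP[_ hcb] /and3P[/eqP eb c1 /implyP c2].
exists ra, ca, rb, cb; do !split => //.
Qed.

Lemma cross (s : seq nat) c c' i : sorted ltn s -> c < c' -> c' < size s ->
  (c.+1 < size s -> i <= nth 0 s c.+1) -> nth 0 s c' < i -> False.
Proof.
move=> so cc hc' h hi.
have c1 : c.+1 < size s by exact: leq_ltn_trans cc hc'.
have so' : sorted leq s by apply: sub_sorted so => x y; exact: ltnW.
have := sorted_leq_nth leq_trans leqnn 0 so' (c.+1) c'.
rewrite !inE c1 hc' => /(_ isT isT cc) le.
by have := leq_trans (h c1) le; rewrite leqNgt hi.
Qed.

Unset Implicit Arguments.
Theorem mainTheorem4 (n : nat) (mu : seq nat) (T : filling) (i : nat) :
  is_partition n mu -> is_filling n mu T -> row_strict T ->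
  2 <= i <= n ->
  alpha T i + 1 <= nonzero_rows (fshape (subfilling T i)).
Proof.
move=> _ /andP[_ hp] hrs /andP[i2 iN].
have U : uniq (flatten T) by rewrite (perm_uniq hp) iota_uniq.
have Srow r : r < size T -> sorted ltn (nth [::] T r).
  by move=> hr; apply: (allP hrs); exact: mem_nth.
have Urow r : r < size T -> uniq (nth [::] T r).
  by move=> hr; apply: (sorted_uniq ltn_trans ltnn); exact: Srow.
have iT : i \in flatten T by rewrite (perm_mem hp) mem_iota; apply/andP; split;
  [exact: leq_trans i2 | rewrite add1n ltnS].
have [s sT is_] := flattenP iT.
set ri := index s T.
have hri : ri < size T by rewrite index_mem.
have iri : i \in nth [::] T ri by rewrite nth_index.
have fi : frow T i = ri by apply: frow_spec.
have key a : dimpair T a i -> exists ca,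
    [/\ frow T a < size T, ca < rowlen T (frow T a), entry T (frow T a) ca = a,
        (ca.+1 < rowlen T (frow T a)) -> i <= entry T (frow T a) ca.+1
      & frow T a != ri].
  case/dimpairP=> [ra [ca [rb [cb [ai [hra [hca [ea [hrb [hcb [eb [c1 c2]]]]]]]]]]]].
  have ma : a \in nth [::] T ra by rewrite -ea; exact: mem_nth.
  have fa : frow T a = ra by apply: frow_spec.
  have mb : i \in nth [::] T rb by rewrite -eb; exact: mem_nth.
  have rbE : rb = ri by rewrite -fi; symmetry; apply: frow_spec.
  exists ca; rewrite fa; split => //.
  apply/eqP => rai; subst rb; rewrite -rai ltnn andbF /= in c1; rewrite -rai in hcb eb.
  have := sorted_ltn_nth ltn_trans 0 (Srow _ hra) cb ca.
  rewrite !inE hcb hca /= => /(_ isT isT c1).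
  rewrite /entry in ea eb; rewrite eb ea => ia.
  by have := ltn_trans ai ia; rewrite ltnn.
have inj : {in filter (fun a => dimpair T a i) (iota 0 i) &, injective (frow T)}.
  move=> a a'; rewrite !mem_filter => /andP[pa _] /andP[pa' _] e.
  have [ca [h1 h2 h3 h4 _]] := key a pa.
  have [ca' [h1' h2' h3' h4' _]] := key a' pa'.
  rewrite -e in h2' h3' h4'.
  have ai : a < i by case/andP: pa.
  have ai' : a' < i by case/andP: pa'.
  set r := frow T a in h1 h2 h3 h4 h2' h3' h4'.
  have so := Srow _ h1.
  suff : ca = ca' by move=> ec; rewrite -h3 -h3' ec.
  apply/eqP; rewrite eqn_leq; apply/andP; split; rewrite leqNgt; apply/negP => lt.
  - apply: (cross so lt h2 h4'); by move: h3; rewrite /entry => ->.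
  - apply: (cross so lt h2' h4); by move: h3'; rewrite /entry => ->.
set A := filter (fun a => dimpair T a i) (iota 0 i).
set R := filter (fun r => has (fun x => x <= i) (nth [::] T r)) (iota 0 (size T)).
have -> : nonzero_rows (fshape (subfilling T i)) = size R.
  rewrite /nonzero_rows /fshape /subfilling size_filter -{1}(mkseq_nth [::] T) /mkseq !count_map.
  by apply: eq_count => r /=; rewrite size_filter has_count lt0n.
have -> : alpha T i + 1 = size (map (frow T) (i :: A)) by rewrite size_map /= size_filter addn1.
apply: uniq_leq_size.
- rewrite /= (map_inj_in_uniq inj) filter_uniq ?iota_uniq // andbT.
  apply/mapP => -[a aA fe]; move: aA; rewrite mem_filter => /andP[pa _].
  have [ca [_ _ _ _ ne]] := key a pa.
  by rewrite fi in fe; rewrite -fe eqxx in ne.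
- move=> r /=; rewrite inE => /orP[/eqP-> | /mapP[a aA ->]]; rewrite mem_filter mem_iota /= add0n.
  + by rewrite fi hri andbT; apply/hasP; exists i.
  + move: aA; rewrite mem_filter => /andP[pa _].
    have [ca [h1 h2 h3 _ _]] := key a pa.
    rewrite h1 andbT; apply/hasP; exists a; last by case/andP: pa => /ltnW.
    by have := mem_nth 0 h2; rewrite /entry in h3; rewrite h3.
Qed.
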